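(* Let $n,m\ge 5$ be integers with $m\equiv 1\pmod 4$ and $n\equiv 1\pmod 4$. Then $\gamma_t(C_n\times C_m)\le\frac{(n+1)(m+1)}{4}$ and $\gamma_p(C_n\times C_m)\le\frac{(n+1)(m+1)}{4}+1$.
   Context: All graphs are finite, simple and undirected. $C_n$ denotes the cycle of order $n$ and $G\times H$ the Cartesian product of graphs. For a graph $G$ without isolated vertices: a set $D\subseteq V(G)$ is a total dominating set if every vertex of $G$ (including those in $D$) has a neighbour in $D$; $\gamma_t(G)$ is the minimum size of a total dominating set. A set $D\subseteq V(G)$ is a paired dominating set if every vertex outside $D$ has a neighbour in $D$ and the induced subgraph $G[D]$ has a perfect matching; $\gamma_p(G)$ is the minimum size of a paired dominating set. *)

(* Defs.v *)
From mathcomp Require Import all_boot.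
Set Implicit Arguments. Unset Strict Implicit. Unset Printing Implicit Defensive.

Section Graph.
Variable T : finType.
Variable adj : rel T.

Definition total_dominating (D : {set T}) : bool :=
  [forall v, [exists u in D, adj v u]].

Definition dominating (D : {set T}) : bool :=
  [forall v, (v \in D) || [exists u in D, adj v u]].

Definition perfect_matching_in (D : {set T}) (M : {set {set T}}) : bool :=
  [&& [forall e in M, [exists u, exists v,
          [&& e == [set u; v], u != v, adj u v, u \in D & v \in D]]],
      trivIset M & cover M == D].

Definition paired_dominating (D : {set T}) : bool :=
  dominating D && [exists M, perfect_matching_in D M].

Definition min_card (P : pred {set T}) : nat :=
  \big[minn/#|T|]_(D : {set T} | P D) #|D|.

Definition gamma_t : nat := min_card total_dominating.
Definition gamma_p : nat := min_card paired_dominating.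
End Graph.

Definition cycle_adj (n : nat) : rel 'I_n :=
  fun i j => (j == (i + 1) %% n :> nat) || (i == (j + 1) %% n :> nat).
Arguments cycle_adj n : clear implicits.

Definition cart_adj (A B : finType) (ea : rel A) (eb : rel B) : rel (A * B) :=
  fun x y => ((x.1 == y.1) && eb x.2 y.2) || ((x.2 == y.2) && ea x.1 y.1).

Definition CnCm_adj (n m : nat) : rel ('I_n * 'I_m) :=
  cart_adj (cycle_adj n) (cycle_adj m).
Arguments CnCm_adj n m : clear implicits.

(* Main.v *)
Require Import Defs.
From mathcomp Require Import all_boot zify.
Set Implicit Arguments. Unset Strict Implicit. Unset Printing Implicit Defensive.

Lemma min_card_le (T : finType) (P : pred {set T}) (D : {set T}) :
  P D -> min_card P <= #|D|.
Proof.
move=> PD; rewrite /min_card.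
have : D \in index_enum {set T} by rewrite mem_index_enum.
elim: (index_enum _) => [//|y r IH]; rewrite big_cons inE.
case/orP=> [/eqP <-|/IH h]; first by rewrite PD geq_minl.
by case: ifP => _ //; rewrite geq_min h orbT.
Qed.

Section Cyc.
Variable n : nat.
Hypothesis Hn : 1 < n.
Let Hn0 : 0 < n. Proof. by apply: ltnW. Qed.

Definition osucc (i : 'I_n) : 'I_n := Ordinal (ltn_pmod i.+1 Hn0).
Definition opred (i : 'I_n) : 'I_n := Ordinal (ltn_pmod (i + n.-1) Hn0).

Lemma osuccK : cancel osucc opred.
Proof.
move=> i; apply: val_inj => /=.
have hi := ltn_ord i.
case: (ltnP i.+1 n) => h.
  rewrite (modn_small h). have -> : i.+1 + n.-1 = i + n by lia.
  by rewrite modnDr modn_small.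
have e : i.+1 = n by lia.
by rewrite e modnn add0n modn_small //; lia.
Qed.

Lemma opredK : cancel opred osucc.
Proof.
move=> i; apply: val_inj => /=.
have hi := ltn_ord i.
case: (posnP i) => h.
  rewrite h add0n (modn_small (_ : n.-1 < n)); last by lia.
  have -> : (n.-1).+1 = n by lia.
  by rewrite modnn.
have -> : i + n.-1 = i.-1 + n by lia.
rewrite modnDr (modn_small (_ : i.-1 < n)); last by lia.
rewrite modn_small; lia.
Qed.

Lemma adj_succ (i : 'I_n) : cycle_adj n i (osucc i).
Proof. by rewrite /cycle_adj /= addn1 eqxx. Qed.

Lemma adj_pred (i : 'I_n) : cycle_adj n i (opred i).
Proof.
rewrite /cycle_adj; apply/orP; right.
rewrite addn1; have := opredK i => /(congr1 val) /= ->.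
by [].
Qed.

Lemma osucc_neq (i : 'I_n) : osucc i != i.
Proof.
apply/eqP => /(congr1 val) /=. have hi := ltn_ord i.
case: (ltnP i.+1 n) => h.
  by rewrite modn_small //; lia.
have e : i.+1 = n by lia.
rewrite e modnn; lia.
Qed.

Lemma opred_neq (i : 'I_n) : opred i != i.
Proof.
apply/eqP => e. have := osucc_neq (opred i). by rewrite opredK e eqxx.
Qed.

End Cyc.

Definition L10 := iota 0 10.
Definition prd (sl : nat -> seq nat) t := [seq u <- L10 | t \in sl u].

Definition domck (sn sm : nat -> seq nat) (B : nat -> nat -> bool) (tot : bool) :=
  all (fun t => all (fun s =>
    all (fun tm => all (fun tp => all (fun sm' => all (fun sp =>
      [|| (~~tot && B t s), B tm s, B tp s, B t sm' | B t sp])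
    (sm s)) (prd sm s)) (sn t)) (prd sn t)) L10) L10.

Definition mck (sn sm : nat -> seq nat) (B : nat -> nat -> bool) (d : nat -> nat -> nat) :=
 all (fun t => all (fun s => B t s ==>
   match d t s with
   | 0 => all (fun t' => B t' s && (d t' s == 1)) (sn t)
   | 1 => all (fun t' => B t' s && (d t' s == 0)) (prd sn t)
   | 2 => all (fun s' => B t s' && (d t s' == 3)) (sm s)
   | _ => all (fun s' => B t s' && (d t s' == 2)) (prd sm s)
   end) L10) L10.

Section Gen.
Variables n m : nat.
Hypothesis Hn : 1 < n.
Hypothesis Hm : 1 < m.
Variables (ln lm : nat -> nat) (sn sm : nat -> seq nat).
Hypothesis Hln : forall r : 'I_n, ln r < 10.
Hypothesis Hlm : forall c : 'I_m, lm c < 10.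
Hypothesis Hsn : forall r : 'I_n, ln (osucc Hn r) \in sn (ln r).
Hypothesis Hsm : forall c : 'I_m, lm (osucc Hm c) \in sm (lm c).
Variable B : nat -> nat -> bool.

Definition DD : {set 'I_n * 'I_m} := [set x : 'I_n * 'I_m | B (ln x.1) (lm x.2)].

Let G := CnCm_adj n m.

Lemma inL (k : nat) : k < 10 -> k \in L10.
Proof. by move=> h; rewrite mem_iota. Qed.

Lemma prdn (r : 'I_n) : ln (opred Hn r) \in prd sn (ln r).
Proof.
rewrite mem_filter inL // andbT.
by have := Hsn (opred Hn r); rewrite opredK.
Qed.

Lemma prdm (c : 'I_m) : lm (opred Hm c) \in prd sm (lm c).
Proof.
rewrite mem_filter inL // andbT.
by have := Hsm (opred Hm c); rewrite opredK.
Qed.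

Lemma dom_gen tot : domck sn sm B tot ->
  forall x : 'I_n * 'I_m, (~~tot && (x \in DD)) || [exists u in DD, G x u].
Proof.
move=> ck [r c].
move/allP: ck => /(_ _ (inL (Hln r))) /allP /(_ _ (inL (Hlm c))).
move/allP => /(_ _ (prdn r)) /allP /(_ _ (Hsn r)) /allP /(_ _ (prdm c)) /allP /(_ _ (Hsm c)).
rewrite /DD inE /=.
case/orP=> [->//|/orP[h|/orP[h|/orP[h|h]]]]; apply/orP; right; apply/existsP.
- exists (opred Hn r, c); rewrite inE /= h /G /CnCm_adj /cart_adj /= eqxx /=.
  by rewrite adj_pred orbT.
- exists (osucc Hn r, c); rewrite inE /= h /G /CnCm_adj /cart_adj /= eqxx /=.
  by rewrite adj_succ orbT.
- exists (r, opred Hm c); rewrite inE /= h /G /CnCm_adj /cart_adj /= eqxx /=.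
  by rewrite adj_pred.
- exists (r, osucc Hm c); rewrite inE /= h /G /CnCm_adj /cart_adj /= eqxx /=.
  by rewrite adj_succ.
Qed.

Lemma tdom_gen : domck sn sm B true -> total_dominating G DD.
Proof. by move=> ck; apply/forallP => x; have := dom_gen ck x. Qed.

Lemma ddom_gen : domck sn sm B false -> dominating G DD.
Proof. by move=> ck; apply/forallP => x; have := dom_gen ck x. Qed.

Variable d : nat -> nat -> nat.

Definition pp (x : 'I_n * 'I_m) : 'I_n * 'I_m :=
  match d (ln x.1) (lm x.2) with
  | 0 => (osucc Hn x.1, x.2)
  | 1 => (opred Hn x.1, x.2)
  | 2 => (x.1, osucc Hm x.2)
  | _ => (x.1, opred Hm x.2)
  end.

Lemma pp_prop : mck sn sm B d -> forall x, x \in DD ->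
  [/\ pp x \in DD, pp (pp x) = x, G x (pp x) & pp x != x].
Proof.
move=> ck [r c]; rewrite /DD inE /= => Bx.
move/allP: ck => /(_ _ (inL (Hln r))) /allP /(_ _ (inL (Hlm c))).
rewrite Bx /= /pp /=.
case: (d (ln r) (lm c)) => [|[|[|k]]] /allP H.
- have /andP[h1 /eqP h2] := H _ (Hsn r).
  rewrite inE /= h1 h2 osuccK; split => //.
    by rewrite /G /CnCm_adj /cart_adj /= eqxx adj_succ orbT.
  by apply/eqP => -[] /eqP; rewrite (negbTE (osucc_neq _ _)).
- have /andP[h1 /eqP h2] := H _ (prdn r).
  rewrite inE /= h1 h2 opredK; split => //.
    by rewrite /G /CnCm_adj /cart_adj /= eqxx adj_pred orbT.
  by apply/eqP => -[] /eqP; rewrite (negbTE (opred_neq _ _)).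
- have /andP[h1 /eqP h2] := H _ (Hsm c).
  rewrite inE /= h1 h2 osuccK; split => //.
    by rewrite /G /CnCm_adj /cart_adj /= eqxx adj_succ.
  by apply/eqP => -[] /eqP; rewrite (negbTE (osucc_neq _ _)).
- have /andP[h1 /eqP h2] := H _ (prdm c).
  rewrite inE /= h1 h2 opredK; split => //.
    by rewrite /G /CnCm_adj /cart_adj /= eqxx adj_pred.
  by apply/eqP => -[] /eqP; rewrite (negbTE (opred_neq _ _)).
Qed.

Definition MM : {set {set 'I_n * 'I_m}} := [set [set x; pp x] | x in DD].

Lemma pm_gen : mck sn sm B d -> perfect_matching_in G DD MM.
Proof.
move=> ck.
have key : forall x z, x \in DD -> z \in [set x; pp x] -> [set x; pp x] = [set z; pp z].
  move=> x z Dx; rewrite !inE => /orP[/eqP->//|/eqP->].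
  have [_ -> _ _] := pp_prop ck Dx.
  by rewrite setUC.
apply/and3P; split.
- apply/forallP => e; apply/implyP => /imsetP[x Dx ->].
  have [h1 h2 h3 h4] := pp_prop ck Dx.
  apply/existsP; exists x; apply/existsP; exists (pp x).
  by rewrite eqxx eq_sym h4 h3 Dx h1.
- apply/trivIsetP => A1 A2 /imsetP[x Dx ->] /imsetP[y Dy ->] neq.
  rewrite disjoint_subset; apply/subsetP => z hz1; rewrite inE; apply/negP => hz2; move: neq.
  by rewrite (key _ _ Dx hz1) (key _ _ Dy hz2) eqxx.
- apply/eqP/setP => z; apply/bigcupP/idP.
    case=> A /imsetP[x Dx ->] /set2P[->|->] //.
    by have [] := pp_prop ck Dx.
  move=> Dz; exists [set z; pp z]; first by apply/imsetP; exists z.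
  by rewrite !inE eqxx.
Qed.

Lemma paired_gen : domck sn sm B false -> mck sn sm B d -> paired_dominating G DD.
Proof.
move=> c1 c2; rewrite /paired_dominating ddom_gen //=.
by apply/existsP; exists MM; apply: pm_gen.
Qed.

End Gen.

Definition lab (n r : nat) : nat :=
  if n %% 8 == 5 then (if r == n.-1 then 8 else r %% 8)
  else (if r == n.-2 then 8 else if r == n.-1 then 9 else r %% 8).

Definition succ5 (t : nat) : seq nat :=
  match t with 3 => [:: 4; 8] | 7 => [:: 0] | 8 => [:: 0] | _ => [:: t.+1] end.
Definition succ1 (t : nat) : seq nat :=
  match t with 6 => [:: 7; 8] | 7 => [:: 0] | 8 => [:: 9] | 9 => [:: 0] | _ => [:: t.+1] end.

Definition ltd (n r : nat) : nat := if r == n.-1 then 4 else r %% 4.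
Definition succT (t : nat) : seq nat :=
  match t with 0 => [:: 1] | 1 => [:: 2] | 2 => [:: 3] | 3 => [:: 0; 4] | 4 => [:: 0] | _ => [::] end.

Lemma lab_lt n r : lab n r < 10.
Proof.
rewrite /lab; have := ltn_pmod r (isT : 0 < 8).
move=> h; repeat case: ifP => _; lia.
Qed.

Lemma ltd_lt n r : ltd n r < 10.
Proof. rewrite /ltd; have := ltn_pmod r (isT : 0 < 4); case: ifP => _ //; lia. Qed.

Lemma val_osucc n (Hn : 1 < n) (r : 'I_n) : val (osucc Hn r) = if r.+1 == n then 0 else r.+1.
Proof.
rewrite /=; have hr := ltn_ord r.
case: eqP => [->|h]; first by rewrite modnn.
by rewrite modn_small //; lia.
Qed.

Lemma mod8S r : r.+1 %% 8 = if r %% 8 == 7 then 0 else (r %% 8).+1.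
Proof. case: eqP => h; lia. Qed.

Lemma mod4S r : r.+1 %% 4 = if r %% 4 == 3 then 0 else (r %% 4).+1.
Proof. case: eqP => h; lia. Qed.

Lemma lab_succ5 n (Hn : 1 < n) : 5 <= n -> n %% 8 = 5 ->
  forall r : 'I_n, lab n (osucc Hn r) \in succ5 (lab n r).
Proof.
move=> h5 h8 r; rewrite val_osucc /lab h8 /=.
have hr := ltn_ord r.
case: (eqVneq (r : nat) n.-1) => e.
  have -> : r.+1 == n by apply/eqP; lia.
  have -> : (0 == n.-1) = false by apply/eqP; lia.
  by [].
have -> : r.+1 == n = false by apply/eqP; lia.
case: (eqVneq r.+1 n.-1) => e2.
  have -> : r %% 8 = 3 by lia.
  by [].
rewrite mod8S.
have : r %% 8 < 8 by apply: ltn_pmod.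
case: (r %% 8) => [|[|[|[|[|[|[|[|k]]]]]]]] //.
Qed.

Lemma lab_succ1 n (Hn : 1 < n) : 5 <= n -> n %% 8 = 1 ->
  forall r : 'I_n, lab n (osucc Hn r) \in succ1 (lab n r).
Proof.
move=> h5 h8 r; rewrite val_osucc /lab h8 /=.
have hr := ltn_ord r.
case: (eqVneq (r : nat) n.-1) => e.
  have -> : r.+1 == n by apply/eqP; lia.
  have -> : (0 == n.-2) = false by apply/eqP; lia.
  have -> : (0 == n.-1) = false by apply/eqP; lia.
  have -> : ((r:nat) == n.-2) = false by apply/eqP; lia.
  by [].
have -> : r.+1 == n = false by apply/eqP; lia.
case: (eqVneq r.+1 n.-1) => e2.
  have -> : ((r:nat) == n.-2) by apply/eqP; lia.
  have -> : (r.+1 == n.-2) = false by apply/eqP; lia.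
  by [].
case: (eqVneq r.+1 n.-2) => e3.
  have -> : r %% 8 = 6 by lia.
  have -> : ((r:nat) == n.-2) = false by apply/eqP; lia.
  by [].
have -> : ((r:nat) == n.-2) = false by apply/eqP; lia.
rewrite mod8S.
have : r %% 8 < 8 by apply: ltn_pmod.
case: (r %% 8) => [|[|[|[|[|[|[|[|k]]]]]]]] //.
Qed.

Lemma ltd_succ n (Hn : 1 < n) : 5 <= n -> n %% 4 = 1 ->
  forall r : 'I_n, ltd n (osucc Hn r) \in succT (ltd n r).
Proof.
move=> h5 h4 r; rewrite val_osucc /ltd /=.
have hr := ltn_ord r.
case: (eqVneq (r : nat) n.-1) => e.
  have -> : r.+1 == n by apply/eqP; lia.
  have -> : (0 == n.-1) = false by apply/eqP; lia.
  by [].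
have -> : r.+1 == n = false by apply/eqP; lia.
case: (eqVneq r.+1 n.-1) => e2.
  have -> : r %% 4 = 3 by lia.
  by [].
rewrite mod4S.
have : r %% 4 < 4 by apply: ltn_pmod.
case: (r %% 4) => [|[|[|[|k]]]] //.
Qed.

Lemma card_DD n m (ln lm : nat -> nat) (B : nat -> nat -> bool) :
  #|DD n m ln lm B| = \sum_(0 <= r < n) \sum_(0 <= c < m) B (ln r) (lm c).
Proof.
transitivity (\sum_(r < n) \sum_(c < m) (B (ln r) (lm c) : nat)); last first.
  by rewrite big_mkord; apply: eq_bigr => r _; rewrite big_mkord.
rewrite -sum1_card big_mkcond pair_big /=.
by apply: eq_bigr => -[r c] _; rewrite inE /=; case: (B _ _).
Qed.

Lemma sum_per (p q : nat) (G : nat -> nat) : 0 < p ->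
  \sum_(0 <= r < p * q) G (r %% p) = q * \sum_(0 <= t < p) G t.
Proof.
move=> hp; elim: q => [|q IH]; first by rewrite muln0 big_geq.
rewrite mulnS (big_cat_nat _ (n := p * q)) //=; last by lia.
rewrite IH -{1}(add0n (p * q)) big_addn.
have -> : p + p * q - p * q = p by lia.
rewrite (eq_big_nat _ _ (F2 := G)); first by lia.
by move=> i /andP[_ hi]; rewrite addnC mulnC modnMDl modn_small.
Qed.

Lemma sum5 q (F : nat -> nat) :
  \sum_(0 <= r < 8 * q + 5) F (lab (8 * q + 5) r) =
  q * \sum_(0 <= t < 8) F t + (F 0 + F 1 + F 2 + F 3 + F 8).
Proof.
have h8 : (8 * q + 5) %% 8 == 5 by apply/eqP; lia.
rewrite (big_cat_nat _ (n := 8 * q)) //=; last by lia.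
rewrite (eq_big_nat _ _ (F2 := fun r => F (r %% 8))); last first.
  move=> r /andP[_ hr]; rewrite /lab h8; case: eqP => // h; lia.
rewrite sum_per // -{1}(add0n (8 * q)) big_addn.
have -> : 8 * q + 5 - 8 * q = 5 by lia.
congr (_ + _); rewrite unlock /= /lab h8.
have e : forall i, i < 8 -> (i + 8 * q) %% 8 = i by move=> i hi; lia.
rewrite (_ : (8 * q + 5).-1 = 4 + 8 * q); last by lia.
rewrite !eqn_add2r /= !e //; lia.
Qed.

Lemma sum1 q (F : nat -> nat) :
  \sum_(0 <= r < 8 * q + 9) F (lab (8 * q + 9) r) =
  q * \sum_(0 <= t < 8) F t + (F 0 + F 1 + F 2 + F 3 + F 4 + F 5 + F 6 + F 8 + F 9).
Proof.
have h8 : (8 * q + 9) %% 8 == 5 = false by apply/eqP; lia.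
rewrite (big_cat_nat _ (n := 8 * q)) //=; last by lia.
rewrite (eq_big_nat _ _ (F2 := fun r => F (r %% 8))); last first.
  move=> r /andP[_ hr]; rewrite /lab h8; case: eqP => h; first lia.
  case: eqP => // h'; lia.
rewrite sum_per // -{1}(add0n (8 * q)) big_addn.
have -> : 8 * q + 9 - 8 * q = 9 by lia.
congr (_ + _); rewrite unlock /= /lab h8.
have e : forall i, i < 8 -> (i + 8 * q) %% 8 = i by move=> i hi; lia.
rewrite (_ : (8 * q + 9).-2 = 7 + 8 * q); last by lia.
rewrite (_ : (8 * q + 9).-1 = 8 + 8 * q); last by lia.
rewrite !eqn_add2r /= !e //; lia.
Qed.

Lemma sumT a (F : nat -> nat) :
  \sum_(0 <= r < 4 * a + 1) F (ltd (4 * a + 1) r) = a * \sum_(0 <= t < 4) F t + F 4.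
Proof.
rewrite (big_cat_nat _ (n := 4 * a)) //=; last by lia.
rewrite (eq_big_nat _ _ (F2 := fun r => F (r %% 4))); last first.
  move=> r /andP[_ hr]; rewrite /ltd; case: eqP => // h; lia.
rewrite sum_per // -{1}(add0n (4 * a)) big_addn.
have -> : 4 * a + 1 - 4 * a = 1 by lia.
congr (_ + _); rewrite unlock /= /ltd.
rewrite (_ : (4 * a + 1).-1 = 0 + 4 * a); last by lia.
rewrite eqxx; lia.
Qed.

Definition look (tbl : seq (nat * nat * nat)) (t s : nat) : nat :=
  head 0 [seq x.2 | x <- tbl & x.1 == (t, s)].

Definition BT (t s : nat) : bool :=
  ((t == 0) || (t == 4)) && (s \in [:: 0; 1; 4]) || (t == 2) && (s \in [:: 2; 3; 4]).
Definition B55 (t s : nat) : bool := (t, s) \in [:: (0,4); (0,5); (0,8); (1,2); (1,7); (1,8); (2,2); (2,7); (2,8); (3,4); (3,5); (3,8); (4,0); (4,1); (5,3); (5,6); (6,3); (6,6); (7,0); (7,1); (8,0); (8,1); (8,2); (8,7); (8,8)].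
Definition d55 : nat -> nat -> nat := look [:: (0,4,2); (0,5,3); (0,8,0); (1,2,0); (1,7,0); (1,8,1); (2,2,1); (2,7,1); (2,8,0); (3,4,2); (3,5,3); (3,8,1); (4,0,2); (4,1,3); (5,3,0); (5,6,0); (6,3,1); (6,6,1); (7,0,2); (7,1,3); (8,0,3); (8,1,2); (8,2,3); (8,7,2); (8,8,2)].
Definition B15 (t s : nat) : bool := (t, s) \in [:: (0,4); (0,5); (0,8); (1,2); (1,7); (1,8); (2,2); (2,7); (2,8); (3,4); (3,5); (3,8); (4,0); (4,1); (5,3); (5,6); (6,3); (6,6); (7,0); (7,1); (8,0); (8,1); (8,8); (9,0); (9,1); (9,4); (9,5); (9,8)].
Definition d15 : nat -> nat -> nat := look [:: (0,4,2); (0,5,3); (0,8,0); (1,2,0); (1,7,0); (1,8,1); (2,2,1); (2,7,1); (2,8,0); (3,4,2); (3,5,3); (3,8,1); (4,0,2); (4,1,3); (5,3,0); (5,6,0); (6,3,1); (6,6,1); (7,0,2); (7,1,3); (8,0,0); (8,1,0); (8,8,0); (9,0,1); (9,1,1); (9,4,2); (9,5,3); (9,8,1)].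
Definition B51 (t s : nat) : bool := (t, s) \in [:: (0,4); (0,5); (1,2); (1,7); (1,8); (1,9); (2,2); (2,7); (2,8); (2,9); (3,4); (3,5); (4,0); (4,1); (5,3); (5,6); (5,8); (6,3); (6,6); (6,8); (7,0); (7,1); (8,0); (8,1); (8,4); (8,5); (8,8); (8,9)].
Definition d51 : nat -> nat -> nat := look [:: (0,4,2); (0,5,3); (1,2,0); (1,7,0); (1,8,0); (1,9,0); (2,2,1); (2,7,1); (2,8,1); (2,9,1); (3,4,2); (3,5,3); (4,0,2); (4,1,3); (5,3,0); (5,6,0); (5,8,0); (6,3,1); (6,6,1); (6,8,1); (7,0,2); (7,1,3); (8,0,2); (8,1,3); (8,4,2); (8,5,3); (8,8,2); (8,9,3)].
Definition B11 (t s : nat) : bool := (t, s) \in [:: (0,4); (0,5); (1,2); (1,7); (1,8); (1,9); (2,2); (2,7); (2,8); (2,9); (3,4); (3,5); (4,0); (4,1); (5,3); (5,6); (5,8); (6,3); (6,6); (6,8); (7,0); (7,1); (8,0); (8,1); (9,0); (9,1); (9,4); (9,5); (9,8); (9,9)].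
Definition d11 : nat -> nat -> nat := look [:: (0,4,2); (0,5,3); (1,2,0); (1,7,0); (1,8,0); (1,9,0); (2,2,1); (2,7,1); (2,8,1); (2,9,1); (3,4,2); (3,5,3); (4,0,2); (4,1,3); (5,3,0); (5,6,0); (5,8,0); (6,3,1); (6,6,1); (6,8,1); (7,0,2); (7,1,3); (8,0,0); (8,1,0); (9,0,1); (9,1,1); (9,4,2); (9,5,3); (9,8,2); (9,9,3)].

Lemma ckT : domck succT succT BT true. Proof. by vm_compute. Qed.
Lemma ck55 : domck succ5 succ5 B55 false. Proof. by vm_compute. Qed.
Lemma ck15 : domck succ1 succ5 B15 false. Proof. by vm_compute. Qed.
Lemma ck51 : domck succ5 succ1 B51 false. Proof. by vm_compute. Qed.
Lemma ck11 : domck succ1 succ1 B11 false. Proof. by vm_compute. Qed.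
Lemma mk55 : mck succ5 succ5 B55 d55. Proof. by vm_compute. Qed.
Lemma mk15 : mck succ1 succ5 B15 d15. Proof. by vm_compute. Qed.
Lemma mk51 : mck succ5 succ1 B51 d51. Proof. by vm_compute. Qed.
Lemma mk11 : mck succ1 succ1 B11 d11. Proof. by vm_compute. Qed.

Lemma td_part (n m : nat) :
  5 <= n -> 5 <= m -> n %% 4 = 1 -> m %% 4 = 1 ->
  4 * gamma_t (CnCm_adj n m) <= (n + 1) * (m + 1).
Proof.
move=> h5n h5m h4n h4m.
have Hn : 1 < n by lia. have Hm : 1 < m by lia.
have T := tdom_gen (ltd_lt n) (ltd_lt m) (ltd_succ Hn h5n h4n) (ltd_succ Hm h5m h4m) ckT.
apply: leq_trans (leq_mul (leqnn 4) (min_card_le T)) _.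
rewrite card_DD.
have [a ea] : exists a, n = 4 * a + 1 by exists (n %/ 4); lia.
have [b eb] : exists b, m = 4 * b + 1 by exists (m %/ 4); lia.
rewrite ea eb (sumT a (fun t => \sum_(0 <= c < 4 * b + 1) BT t (ltd (4 * b + 1) c))).
under eq_bigr => t _ do rewrite (sumT b (fun s => BT t s)).
rewrite (sumT b (fun s => BT 4 s)).
rewrite unlock /=.
nia.
Qed.

Lemma ex5 n : 5 <= n -> n %% 8 = 5 -> exists q, n = 8 * q + 5.
Proof. by move=> h1 h2; exists (n %/ 8); lia. Qed.
Lemma ex1 n : 5 <= n -> n %% 8 = 1 -> exists q, n = 8 * q + 9.
Proof. by move=> h1 h2; exists (n %/ 8 - 1); lia. Qed.

Lemma pd55 (n m : nat) (Hn : 1 < n) (Hm : 1 < m) :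
  5 <= n -> 5 <= m -> n %% 8 = 5 -> m %% 8 = 5 ->
  4 * gamma_p (CnCm_adj n m) <= (n + 1) * (m + 1) + 4.
Proof.
move=> h5n h5m h8n h8m.
have P := paired_gen (lab_lt n) (lab_lt m) (lab_succ5 Hn h5n h8n) (lab_succ5 Hm h5m h8m) ck55 mk55.
apply: leq_trans (leq_mul (leqnn 4) (min_card_le P)) _.
rewrite card_DD.
have [q ->] := ex5 h5n h8n.
have [q' ->] := ex5 h5m h8m.
rewrite (sum5 q (fun t => \sum_(0 <= c < 8 * q' + 5) B55 t (lab (8 * q' + 5) c))).
under eq_bigr => t _ do rewrite (sum5 q' (fun s => B55 t s)).
rewrite ?(sum5 q' (fun s => B55 0 s)) ?(sum5 q' (fun s => B55 1 s)) ?(sum5 q' (fun s => B55 2 s)) ?(sum5 q' (fun s => B55 3 s)) ?(sum5 q' (fun s => B55 8 s)).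
rewrite unlock /=.
nia.
Qed.

Lemma pd51 (n m : nat) (Hn : 1 < n) (Hm : 1 < m) :
  5 <= n -> 5 <= m -> n %% 8 = 5 -> m %% 8 = 1 ->
  4 * gamma_p (CnCm_adj n m) <= (n + 1) * (m + 1) + 4.
Proof.
move=> h5n h5m h8n h8m.
have P := paired_gen (lab_lt n) (lab_lt m) (lab_succ5 Hn h5n h8n) (lab_succ1 Hm h5m h8m) ck51 mk51.
apply: leq_trans (leq_mul (leqnn 4) (min_card_le P)) _.
rewrite card_DD.
have [q ->] := ex5 h5n h8n.
have [q' ->] := ex1 h5m h8m.
rewrite (sum5 q (fun t => \sum_(0 <= c < 8 * q' + 9) B51 t (lab (8 * q' + 9) c))).
under eq_bigr => t _ do rewrite (sum1 q' (fun s => B51 t s)).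
rewrite ?(sum1 q' (fun s => B51 0 s)) ?(sum1 q' (fun s => B51 1 s)) ?(sum1 q' (fun s => B51 2 s)) ?(sum1 q' (fun s => B51 3 s)) ?(sum1 q' (fun s => B51 8 s)).
rewrite unlock /=.
nia.
Qed.

Lemma pd15 (n m : nat) (Hn : 1 < n) (Hm : 1 < m) :
  5 <= n -> 5 <= m -> n %% 8 = 1 -> m %% 8 = 5 ->
  4 * gamma_p (CnCm_adj n m) <= (n + 1) * (m + 1) + 4.
Proof.
move=> h5n h5m h8n h8m.
have P := paired_gen (lab_lt n) (lab_lt m) (lab_succ1 Hn h5n h8n) (lab_succ5 Hm h5m h8m) ck15 mk15.
apply: leq_trans (leq_mul (leqnn 4) (min_card_le P)) _.
rewrite card_DD.
have [q ->] := ex1 h5n h8n.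
have [q' ->] := ex5 h5m h8m.
rewrite (sum1 q (fun t => \sum_(0 <= c < 8 * q' + 5) B15 t (lab (8 * q' + 5) c))).
under eq_bigr => t _ do rewrite (sum5 q' (fun s => B15 t s)).
rewrite ?(sum5 q' (fun s => B15 0 s)) ?(sum5 q' (fun s => B15 1 s)) ?(sum5 q' (fun s => B15 2 s)) ?(sum5 q' (fun s => B15 3 s)) ?(sum5 q' (fun s => B15 4 s)) ?(sum5 q' (fun s => B15 5 s)) ?(sum5 q' (fun s => B15 6 s)) ?(sum5 q' (fun s => B15 8 s)) ?(sum5 q' (fun s => B15 9 s)).
rewrite unlock /=.
nia.
Qed.

Lemma pd11 (n m : nat) (Hn : 1 < n) (Hm : 1 < m) :
  5 <= n -> 5 <= m -> n %% 8 = 1 -> m %% 8 = 1 ->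
  4 * gamma_p (CnCm_adj n m) <= (n + 1) * (m + 1) + 4.
Proof.
move=> h5n h5m h8n h8m.
have P := paired_gen (lab_lt n) (lab_lt m) (lab_succ1 Hn h5n h8n) (lab_succ1 Hm h5m h8m) ck11 mk11.
apply: leq_trans (leq_mul (leqnn 4) (min_card_le P)) _.
rewrite card_DD.
have [q ->] := ex1 h5n h8n.
have [q' ->] := ex1 h5m h8m.
rewrite (sum1 q (fun t => \sum_(0 <= c < 8 * q' + 9) B11 t (lab (8 * q' + 9) c))).
under eq_bigr => t _ do rewrite (sum1 q' (fun s => B11 t s)).
rewrite ?(sum1 q' (fun s => B11 0 s)) ?(sum1 q' (fun s => B11 1 s)) ?(sum1 q' (fun s => B11 2 s)) ?(sum1 q' (fun s => B11 3 s)) ?(sum1 q' (fun s => B11 4 s)) ?(sum1 q' (fun s => B11 5 s)) ?(sum1 q' (fun s => B11 6 s)) ?(sum1 q' (fun s => B11 8 s)) ?(sum1 q' (fun s => B11 9 s)).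
rewrite unlock /=.
nia.
Qed.


Theorem theorem5p3 (n m : nat) :
  5 <= n -> 5 <= m -> n %% 4 = 1 -> m %% 4 = 1 ->
  4 * gamma_t (CnCm_adj n m) <= (n + 1) * (m + 1) /\
  4 * gamma_p (CnCm_adj n m) <= (n + 1) * (m + 1) + 4.
Proof.
move=> h5n h5m h4n h4m; split; first exact: td_part.
have Hn : 1 < n by lia. have Hm : 1 < m by lia.
have [h8n|h8n] : n %% 8 = 5 \/ n %% 8 = 1 by lia.
  have [h8m|h8m] : m %% 8 = 5 \/ m %% 8 = 1 by lia.
    exact: pd55.
  exact: pd51.
have [h8m|h8m] : m %% 8 = 5 \/ m %% 8 = 1 by lia.
  exact: pd15.
exact: pd11.
Qed.
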